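(* Let $A,B\in\mathcal{K}_n$. Then $A$ is an endpoint on the line through $A$ and $B$ if and only if for every $\epsilon\in(0,1)$ the convex body $\epsilon B$ is not a summand of $A$.
   Context: A convex body is a closed, bounded, non-empty convex subset of $\mathbb{R}^n$; $\mathcal{K}_n$ is the set of convex bodies in $\mathbb{R}^n$ with Minkowski addition and nonnegative scaling. The support function of $A$ is $h_A(x)=\sup\{a\cdot x: a\in A\}$ and $\mathcal{H}=\{h_A:A\in\mathcal{K}_n\}$. The line through $A$ and $B$ is the set of $X\in\mathcal{K}_n$ with $h_X=(1-t)h_A+th_B$ for some $t\in\mathbb{R}$; $A$ is an endpoint on this line if there is no $t<0$ with $(1-t)h_A+th_B\in\mathcal{H}$ (i.e. the line contains no convex body on the opposite side of $A$ from $B$). For $K,L\in\mathcal{K}_n$, $L$ is a summand of $K$ if there is $M\in\mathcal{K}_n$ with $L+M=K$. *)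

(* Defs.v *)
From HB Require Import structures.
From mathcomp Require Import all_boot all_order all_algebra.
From mathcomp Require Import all_classical all_reals all_analysis.
Set Implicit Arguments. Unset Strict Implicit. Unset Printing Implicit Defensive.
Import Order.TTheory GRing.Theory Num.Theory.
Import numFieldNormedType.Exports.
Local Open Scope classical_set_scope.
Local Open Scope ring_scope.

Section ConvexBodies.
Variables (R : realType) (n : nat).
Notation V := 'rV[R]_n.

Definition dotv (a x : V) : R := \sum_(i < n) a 0 i * x 0 i.

Definition convex_set_in (A : set V) : Prop :=
  forall a b t, A a -> A b -> 0 <= t <= 1 -> A ((1 - t) *: a + t *: b).

Definition convex_body (A : set V) : Prop :=
  [/\ closed A, bounded_set A, A !=set0 & convex_set_in A].

Definition supp_fun (A : set V) (x : V) : R := sup [set dotv a x | a in A].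

Definition mink_sum (A B : set V) : set V := [set a + b | a in A & b in B].
Definition scale_body (e : R) (A : set V) : set V := [set e *: a | a in A].

Definition is_supp_fun (f : V -> R) : Prop :=
  exists X, convex_body X /\ (forall x, f x = supp_fun X x).

Definition endpoint (A B : set V) : Prop :=
  ~ (exists t : R, t < 0 /\
       is_supp_fun (fun x => (1 - t) * supp_fun A x + t * supp_fun B x)).

Definition summand (L K : set V) : Prop :=
  exists M, convex_body M /\ mink_sum L M = K.

End ConvexBodies.

(* Main.v *)
Require Import Defs.
From HB Require Import structures.
From mathcomp Require Import all_boot all_order all_algebra.
From mathcomp Require Import all_classical all_reals all_analysis.
From mathcomp Require Import ring lra.
Import Order.TTheory GRing.Theory Num.Theory.
Import numFieldNormedType.Exports.
Local Open Scope classical_set_scope.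
Local Open Scope ring_scope.

Section Helpers.
Variables (R : realType) (n : nat).
Notation V := 'rV[R]_n.
Implicit Types (a b x : V).

Lemma dotvDl a b x : dotv (a + b) x = dotv a x + dotv b x.
Proof. by rewrite /dotv -big_split; apply: eq_bigr => i _; rewrite mxE mulrDl. Qed.

Lemma dotvZl (c : R) a x : dotv (c *: a) x = c * dotv a x.
Proof. by rewrite /dotv mulr_sumr; apply: eq_bigr => i _; rewrite mxE mulrA. Qed.

Lemma dotvNl a x : dotv (- a) x = - dotv a x.
Proof. by rewrite -scaleN1r dotvZl mulN1r. Qed.

Lemma dotvBl a b x : dotv (a - b) x = dotv a x - dotv b x.
Proof. by rewrite dotvDl dotvNl. Qed.

Lemma dotvC a x : dotv a x = dotv x a.
Proof. by apply: eq_bigr => i _; rewrite mulrC. Qed.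

Lemma dotvDr a b x : dotv x (a + b) = dotv x a + dotv x b.
Proof. by rewrite !(dotvC x) dotvDl. Qed.

Lemma dotvZr (c : R) a x : dotv x (c *: a) = c * dotv x a.
Proof. by rewrite !(dotvC x) dotvZl. Qed.

Lemma dotvBr a b x : dotv x (a - b) = dotv x a - dotv x b.
Proof. by rewrite !(dotvC x) dotvBl. Qed.

Lemma dotv_ge0 a : 0 <= dotv a a.
Proof. by apply: sumr_ge0 => i _; rewrite -expr2 sqr_ge0. Qed.

Lemma dotv_gt0 a : a != 0 -> 0 < dotv a a.
Proof.
move=> a0; rewrite lt_def dotv_ge0 andbT; apply/negP => /eqP /psumr_eq0P H.
move/negP: a0; apply; apply/eqP/rowP => i; rewrite mxE.
have {}H := H (fun j _ => ltac:(rewrite -expr2; exact: sqr_ge0)) i isT.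
by move/eqP: H; rewrite mulf_eq0 orbb => /eqP.
Qed.

Lemma dotv_continuous x : continuous (fun a : V => dotv a x).
Proof.
rewrite /dotv => a.
apply: (@continuous_big _ _ +%R 0 xpredT add_continuous _ (index_enum _) (fun i a => a 0 i * x 0 i)).
move=> i _ b; apply: continuousM; last exact: cst_continuous.
exact: coord_continuous.
Qed.


Lemma dotv_sq_continuous (T : topologicalType) (f : T -> V) :
  continuous f -> continuous (fun t => dotv (f t) (f t)).
Proof.
move=> fc; rewrite /dotv => a.
apply: (@continuous_big _ _ +%R 0 xpredT add_continuous _ (index_enum _) (fun i t => f t 0 i * f t 0 i)).
move=> i _ b; apply: continuousM; exact: (continuous_comp (fc b) (@coord_continuous _ 1 n 0 i (f b))).
Qed.

Lemma supp_max (S : set V) x c : S c -> (forall s, S s -> dotv s x <= dotv c x) ->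
  supp_fun S x = dotv c x.
Proof.
move=> Sc Hc; rewrite /supp_fun; apply/eqP; rewrite eq_le; apply/andP; split.
  by apply: ge_sup; [exists (dotv c x), c | move=> _ [s Ss <-]; exact: Hc].
apply: sup_upper_bound; last by exists c.
split; first by exists (dotv c x), c.
by exists (dotv c x) => _ [s Ss <-]; exact: Hc.
Qed.

Lemma body_compact (K : set V) : convex_body K -> compact K.
Proof. by case=> cK bK _ _; exact: bounded_closed_compact. Qed.

Lemma body_max (K : set V) x : convex_body K ->
  exists2 c, K c & forall s, K s -> dotv s x <= dotv c x.
Proof.
move=> cb; have [_ _ K0 _] := cb.
have [c cK Hc] := EVT_max_rV K0 (@body_compact K cb)
  (continuous_subspaceT (dotv_continuous x)).
by exists c; [rewrite -in_setE | move=> s Ks; apply: Hc; rewrite in_setE].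
Qed.

Lemma body_supp (K : set V) x : convex_body K ->
  exists2 c, K c & supp_fun K x = dotv c x /\ forall s, K s -> dotv s x <= dotv c x.
Proof.
move=> /(@body_max K x) [c Kc Hc]; exists c => //; split => //; exact: supp_max.
Qed.

Lemma body_min (K : set V) p : convex_body K ->
  exists2 q, K q & forall s, K s -> dotv (p - q) (p - q) <= dotv (p - s) (p - s).
Proof.
move=> cb; have [_ _ K0 _] := cb.
have fc : continuous (fun s : V => dotv (p - s) (p - s)).
  apply: dotv_sq_continuous => s; apply: continuousB; first exact: cst_continuous.
  exact: cvg_id.
have [c cK Hc] := EVT_min_rV K0 (@body_compact K cb) (continuous_subspaceT fc).
by exists c; [rewrite -in_setE | move=> s Ks; apply: Hc; rewrite in_setE].
Qed.

Lemma dotv_expand (w u : V) (t : R) :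
  dotv (w - t *: u) (w - t *: u) = dotv w w - 2 * t * dotv u w + t * t * dotv u u.
Proof.
rewrite !dotvBl !dotvBr !dotvZl !dotvZr (dotvC w u); ring.
Qed.

Lemma proj_ineq (S : set V) p q : convex_set_in S -> S q ->
  (forall s, S s -> dotv (p - q) (p - q) <= dotv (p - s) (p - s)) ->
  forall s, S s -> dotv s (p - q) <= dotv q (p - q).
Proof.
move=> cS Sq Hq s Ss.
set w := p - q; set u := s - q.
have key : forall t, 0 < t <= 1 -> 2 * t * dotv u w <= t * t * dotv u u.
  move=> t /andP[t0 t1].
  have Sz : S ((1 - t) *: q + t *: s) by apply: cS => //; rewrite ltW.
  have := Hq _ Sz.
  have -> : p - ((1 - t) *: q + t *: s) = w - t *: u.
    by rewrite /w /u scalerBl scale1r scalerBr !opprD !opprK !addrA [RHS]addrAC.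
  rewrite -/w dotv_expand => H.
  lra.
rewrite -subr_le0 -dotvBl -/u.
rewrite leNgt; apply/negP => c0.
have d0 := dotv_ge0 u.
set c := dotv u w in key c0; set d := dotv u u in key d0.
have cd0 : 0 < c + d by lra.
pose t := c / (c + d).
have t0 : 0 < t by rewrite divr_gt0.
have td : t * (c + d) = c by rewrite /t divfK // gt_eqF.
have t1 : t <= 1 by rewrite /t ler_pdivrMr // mul1r; lra.
have := key t; rewrite t0 t1 => /(_ isT) H.
nra.
Qed.


Lemma scale_cb (c : R) (K : set V) : convex_body K -> convex_body (scale_body c K).
Proof.
move=> cb; have [_ _ [k Kk] cK] := cb.
have cpt : compact (scale_body c K).
  apply: continuous_compact; last exact: (@body_compact K cb).
  apply: continuous_subspaceT => z; apply: continuousZ; first exact: cst_continuous.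
  exact: cvg_id.
split.
- exact: compact_closed (@norm_hausdorff _ _) cpt.
- exact: compact_bounded.
- by exists (c *: k), k.
- move=> _ _ t [a Ka <-] [b Kb <-] t01; exists ((1 - t) *: a + t *: b); first exact: cK.
  by rewrite scalerDr !scalerA mulrC (mulrC c t) -!scalerA.
Qed.

Lemma mink_convex (e : R) (B M : set V) : convex_set_in B -> convex_set_in M ->
  convex_set_in (mink_sum (scale_body e B) M).
Proof.
move=> cB cM _ _ t [_ [b1 Bb1 <-] [m1 Mm1 <-]] [_ [b2 Bb2 <-] [m2 Mm2 <-]] t01.
exists (e *: ((1 - t) *: b1 + t *: b2)); first by exists ((1 - t) *: b1 + t *: b2) => //; exact: cB.
exists ((1 - t) *: m1 + t *: m2); first exact: cM.
rewrite !scalerDr !scalerA (mulrC e (1 - t)) (mulrC e t) -!scalerA.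
by rewrite addrACA.
Qed.

Lemma supp_scale (c : R) (K : set V) x : 0 <= c -> convex_body K ->
  supp_fun (scale_body c K) x = c * supp_fun K x.
Proof.
move=> c0 cb; have [k Kk [-> Hk]] := @body_supp K x cb.
rewrite (@supp_max _ _ (c *: k)); first by rewrite dotvZl.
  by exists k.
by move=> _ [s Ks <-]; rewrite !dotvZl ler_wpM2l // Hk.
Qed.

Lemma supp_mink (e : R) (B M : set V) x : 0 <= e -> convex_body B -> convex_body M ->
  supp_fun (mink_sum (scale_body e B) M) x = e * supp_fun B x + supp_fun M x.
Proof.
move=> e0 cbB cbM.
have [b Bb [-> Hb]] := @body_supp B x cbB.
have [m Mm [-> Hm]] := @body_supp M x cbM.
rewrite (@supp_max _ _ (e *: b + m)); first by rewrite dotvDl dotvZl.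
  by exists (e *: b); [exists b | exists m].
move=> _ [_ [b' Bb' <-] [m' Mm' <-]]; rewrite !dotvDl !dotvZl.
by apply: lerD; [rewrite ler_wpM2l // Hb | exact: Hm].
Qed.


Lemma mink_eq (A B M : set 'rV[R]_n) (e : R) :
  0 <= e -> convex_body A -> convex_body B -> convex_body M ->
  (forall x, supp_fun A x = e * supp_fun B x + supp_fun M x) ->
  mink_sum (scale_body e B) M = A.
Proof.
move=> e0 cbA cbB cbM key.
have [_ _ _ cA] := cbA; have [_ _ [b1 Bb1] cB] := cbB; have [_ _ [m1 Mm1] cM] := cbM.
apply/seteqP; split.
- move=> _ [_ [b Bb <-] [m Mm <-]].
  set p := e *: b + m.
  have [//|nAp] := pselect (A p).
  have [q Aq Hq] := @body_min A p cbA.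
  have ineq := @proj_ineq A p q cA Aq Hq.
  set w := p - q in ineq.
  have w0 : w != 0 by rewrite subr_eq0; apply/eqP => pq; apply: nAp; rewrite pq.
  have qp : dotv q w < dotv p w.
    by rewrite -subr_gt0 -dotvBl; exact: dotv_gt0.
  have [cA' Ac' [hA _]] := @body_supp A w cbA.
  have [cB' Bc' [hB HB]] := @body_supp B w cbB.
  have [cM' Mc' [hM HM]] := @body_supp M w cbM.
  have := key w; rewrite hA hB hM => kw.
  have h1 := ineq _ Ac'.
  have h2 := HB _ Bb; have h3 := HM _ Mm.
  have : dotv p w <= e * dotv cB' w + dotv cM' w.
    by rewrite /p dotvDl dotvZl; apply: lerD => //; rewrite ler_wpM2l.
  move=> h4; exfalso; move: qp; rewrite ltNge => /negP; apply.
  by rewrite (le_trans h4) // -kw.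
- move=> a Aa.
  pose g := fun z : 'rV[R]_n * 'rV[R]_n =>
    dotv (a - (e *: z.1 + z.2)) (a - (e *: z.1 + z.2)).
  have gc : continuous g.
    apply: (@dotv_sq_continuous _ (fun z : 'rV[R]_n * 'rV[R]_n => a - (e *: z.1 + z.2))).
    move=> z; apply: (@continuousB _ _ _ (fun=> a) (fun z0 : 'rV[R]_n * 'rV[R]_n => e *: z0.1 + z0.2) z); first exact: cst_continuous.
    apply: (@continuousD _ _ _ (fun z0 : 'rV[R]_n * 'rV[R]_n => e *: z0.1) (fun z0 : 'rV[R]_n * 'rV[R]_n => z0.2) z); last exact: cvg_snd.
    apply: (@continuousZ _ _ _ (fun=> e) (fun z0 : 'rV[R]_n * 'rV[R]_n => z0.1) z); first exact: cst_continuous.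
    exact: cvg_fst.
  have BM0 : (B `*` M) !=set0 by exists (b1, m1).
  have cptBM : compact (B `*` M).
    by apply: compact_setX; [exact: (@body_compact B cbB) | exact: (@body_compact M cbM)].
  have [[b0 m0] BM0' Hg] := compact_EVT_min BM0 cptBM (continuous_subspaceT gc).
  move: BM0'; rewrite in_setE => -[/= Bb0 Mm0].
  set S := mink_sum (scale_body e B) M.
  set q := e *: b0 + m0.
  have Sq : S q by exists (e *: b0); [exists b0 | exists m0].
  have [//|nSa] := pselect (S a).
  have Hq : forall s, S s -> dotv (a - q) (a - q) <= dotv (a - s) (a - s).
    move=> _ [_ [b Bb <-] [m Mm <-]].
    by have := Hg (b, m); rewrite in_setE => /(_ (conj Bb Mm)).
  have ineq := @proj_ineq S a q (@mink_convex e B M cB cM) Sq Hq.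
  set w := a - q in ineq.
  have w0 : w != 0 by rewrite subr_eq0; apply/eqP => pq; apply: nSa; rewrite pq.
  have qp : dotv q w < dotv a w.
    by rewrite -subr_gt0 -dotvBl; exact: dotv_gt0.
  have [cA' Ac' [hA HA]] := @body_supp A w cbA.
  have [cB' Bc' [hB HB]] := @body_supp B w cbB.
  have [cM' Mc' [hM HM]] := @body_supp M w cbM.
  have := key w; rewrite hA hB hM => kw.
  have h1 : dotv (e *: cB' + cM') w <= dotv q w.
    by apply: ineq; exists (e *: cB'); [exists cB' | exists cM'].
  have h2 := HA _ Aa.
  move: h1; rewrite dotvDl dotvZl -kw => h1.
  exfalso; move: qp; rewrite ltNge => /negP; apply.
  exact: le_trans h2 h1.
Qed.

End Helpers.
Theorem proposition3 (R : realType) (n : nat) (A B : set 'rV[R]_n) :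
  convex_body A -> convex_body B ->
  (endpoint A B <->
   (forall e : R, 0 < e < 1 -> ~ summand (scale_body e B) A)).
Proof.
move=> cbA cbB; split.
- move=> ep e /andP[e0 e1] [M [cbM HA]]; apply: ep.
  have e10 : 0 < 1 - e by rewrite subr_gt0.
  exists (- (e / (1 - e))); split.
    by rewrite oppr_lt0 divr_gt0.
  exists (scale_body (1 - e)^-1 M); split; first exact: scale_cb.
  move=> x; rewrite supp_scale ?invr_ge0 ?ltW // -HA supp_mink ?ltW //.
  by field; rewrite gt_eqF.
- move=> H; rewrite /endpoint => -[t [t0 [X [cbX hX]]]].
  have t10 : 0 < 1 - t by lra.
  pose e := - t / (1 - t); pose c := (1 - t)^-1.
  apply: (H e).
    apply/andP; split; first by rewrite /e divr_gt0 // oppr_gt0.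
    by rewrite /e ltr_pdivrMr // mul1r; lra.
  exists (scale_body c X); split; first exact: scale_cb.
  apply: mink_eq => //; first by rewrite /e divr_ge0 // ?oppr_ge0 ltW.
    exact: scale_cb.
  move=> x; rewrite supp_scale ?invr_ge0 ?ltW // -hX /e /c.
  by field; rewrite gt_eqF.
Qed.
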